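(* For every permutation $w\in S_n$, $\mathsf{rajcode}(w)=\mathsf{rajcode}(RD(w))$.
   Context: For $w\in S_n$, $\mathsf{Inv}(w)=\{(i,j):i<j,\ w(i)>w(j)\}$ and the Rothe diagram is $RD(w)=\{(r,w(r')):(r,r')\in\mathsf{Inv}(w)\}$. Let $\mathrm{LIS}^w(q)$ be the length of the longest increasing subsequence of the one-line notation of $w$ starting with $q$. $\mathsf{rajcode}(w)$ is the weak composition with $r$-th entry $n+1-r-\mathrm{LIS}^w(w(r))$ for $r\in[n]$ and $0$ for $r>n$. A diagram is a finite subset of $\mathbb{Z}_{>0}\times\mathbb{Z}_{>0}$; $(r,c)$ is in row $r$ (row 1 on top), column $c$. The snow diagram $\mathsf{snow}(D)$: iterate through the rows of $D$ from bottom to top; in row $r$, find the rightmost cell $(r,c)\in D$ such that column $c$ contains no dark cloud yet; if it exists, label it a dark cloud and add a snowflake cell at $(r',c)$ for each $r'<r$ with $(r',c)\notin D$. $\mathsf{rajcode}(D)$ is the weak composition whose $i$-th entry is the number of cells (original cells plus snowflakes) in row $i$ of $\mathsf{snow}(D)$. *)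

(* Defs.v *)
From mathcomp Require Import all_boot all_fingroup.
From mathcomp Require Import finmap.
Set Implicit Arguments. Unset Strict Implicit. Unset Printing Implicit Defensive.
Local Open Scope fset_scope.

(* w : 'S_n acts on 'I_n = {0..n-1}; position r (1-based) holds value w(r),
   where w(r) := (w (r-1)).+1 \in [1..n]; w(r) := 0 outside [1..n]. *)
Definition pval (n : nat) (w : 'S_n) (r : nat) : nat :=
  match @insub nat (fun k => k < n) 'I_n r.-1 with
  | Some i => (w i).+1
  | None => 0
  end.

Definition oneline (n : nat) (w : 'S_n) : seq nat := [seq (w i).+1 | i <- enum 'I_n].

Definition inv_pairs (n : nat) (w : 'S_n) : seq ('I_n * 'I_n) :=
  [seq y : 'I_n * 'I_n <- enum [set: ('I_n * 'I_n)%type] | (y.1 < y.2) && (w y.2 < w y.1)].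

Definition Inv (n : nat) (w : 'S_n) : {fset nat * nat} :=
  [fset x in [seq (((x.1 : 'I_n) : nat).+1, ((x.2 : 'I_n) : nat).+1) | x <- inv_pairs w]].

Definition RD (n : nat) (w : 'S_n) : {fset nat * nat} :=
  [fset (x.1, pval w x.2) | x in Inv w].

Definition LIS (n : nat) (w : 'S_n) (q : nat) : nat :=
  \max_(m : n.-tuple bool |
          (head 0 (mask m (oneline w)) == q) && sorted ltn (mask m (oneline w)))
     size (mask m (oneline w)).

Definition rajcode_perm (n : nat) (w : 'S_n) (r : nat) : nat :=
  if (1 <= r <= n) then n.+1 - r - LIS w (pval w r) else 0.

Definition diagram := {fset nat * nat}.

Definition maxrow (D : diagram) : nat := \max_(x <- enum_fset D) x.1.

(* Process rows r, r-1, ..., 1 (bottom to top), given the list [acc] of dark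
   clouds already found in lower rows; returns all dark clouds. *)
Fixpoint clouds_from (D : diagram) (r : nat) (acc : seq (nat * nat))
  : seq (nat * nat) :=
  match r with
  | 0 => acc
  | r'.+1 =>
      let cands := [seq x.2 | x <- enum_fset D &
                              (x.1 == r) && (x.2 \notin [seq y.2 | y <- acc])] in
      let acc' := if cands is [::] then acc
                  else (r, \max_(c <- cands) c) :: acc in
      clouds_from D r' acc'
  end.

Definition dark_clouds (D : diagram) : seq (nat * nat) :=
  clouds_from D (maxrow D) [::].

Definition snowflakes (D : diagram) : seq (nat * nat) :=
  flatten [seq [seq (r', x.2) | r' <- iota 1 x.1.-1 & (r', x.2) \notin D]
          | x <- dark_clouds D].

Definition snow (D : diagram) : diagram := D `|` [fset x in snowflakes D].

Definition rajcode_diag (D : diagram) (i : nat) : nat :=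
  #|` [fset x in snow D | x.1 == i]|.

(* Main.v *)
Require Import Defs.
From mathcomp Require Import all_boot all_fingroup.
From mathcomp Require Import finmap.
From mathcomp Require Import zify.
Set Implicit Arguments. Unset Strict Implicit. Unset Printing Implicit Defensive.

Fixpoint g (t : seq nat) (v : nat) : nat :=
  match t with
  | [::] => 0
  | x :: t' => if v < x then maxn (g t' v) (g t' x).+1 else g t' v
  end.

Lemma g_cons_ge t x v : g t v <= g (x :: t) v.
Proof. by rewrite /=; case: ifP => // _; apply: leq_maxl. Qed.

Lemma g_ub t : forall v u, subseq u t -> sorted ltn u -> all (fun x => v < x) u ->
  size u <= g t v.
Proof.
elim: t => [|x t IH] v [|y u] //=.
move=> Hs Hso /andP[Hvy Hall].
case: eqP Hs => [<- | Hne] Hs.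
- rewrite Hvy; apply: leq_trans (leq_maxr _ _); rewrite ltnS.
  move: Hso; rewrite (path_sortedE ltn_trans) => /andP[Ha Hso].
  exact: IH.
- apply: leq_trans (g_cons_ge t x v).
  by apply: (IH v (y :: u)) => //=; rewrite Hvy.
Qed.

Lemma g_ex t : forall v, exists u, [/\ subseq u t, sorted ltn u,
  all (fun x => v < x) u & size u = g t v].
Proof.
elim: t => [|x t IH] v /=; first by exists [::].
have [u [Hs Hso Ha Hz]] := IH v.
have Hs' : subseq u (x :: t) by apply: subseq_trans Hs (subseq_cons t x).
case: ltnP => Hvx; last by exists u.
case: (leqP (g t x).+1 (g t v)) => Hc.
- by exists u; split => //; rewrite Hz /maxn ltnNge Hc.
- have [u' [Hs2 Hso2 Ha2 Hz2]] := IH x.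
  exists (x :: u'); split => //=.
  + by rewrite eqxx.
  + by rewrite (path_sortedE ltn_trans) Ha2 Hso2.
  + rewrite Hvx /=; apply/allP => y Hy; apply: ltn_trans Hvx _.
    exact: (allP Ha2).
  + by rewrite Hz2 /maxn ?Hc.
Qed.

Lemma subseq_split (a b u : seq nat) x : x \notin a ->
  subseq (x :: u) (a ++ x :: b) -> subseq u b.
Proof.
elim: a => [|y a IH] /=; first by rewrite eqxx.
rewrite inE negb_or => /andP[Hxy Hxa].
by rewrite (negbTE Hxy); apply: IH.
Qed.

Section Perm.
Variables (n : nat) (w : 'S_n).
Local Notation s := (oneline w).

Lemma size_s : size s = n.
Proof. by rewrite /oneline size_map size_enum_ord. Qed.

Lemma nth_s (a : 'I_n) : nth 0 s a = (w a).+1.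
Proof.
rewrite /oneline (nth_map a) ?size_enum_ord //.
by rewrite nth_ord_enum.
Qed.

Lemma uniq_s : uniq s.
Proof.
rewrite /oneline map_inj_uniq ?enum_uniq //.
by move=> a b /= [] /val_inj /perm_inj.
Qed.

Lemma pos_s x : x \in s -> 0 < x.
Proof. by case/mapP => a _ ->. Qed.

Lemma pval_nth r : 1 <= r <= n -> Defs.pval w r = nth 0 s r.-1.
Proof.
case: r => // r /= Hr.
rewrite /Defs.pval /= (insubT (fun k => k < n) Hr) /=.
by rewrite -(nth_s (Ordinal Hr)).
Qed.

Lemma LIS_g i : 1 <= i <= n ->
  LIS w (nth 0 s i.-1) = (g (drop i s) (nth 0 s i.-1)).+1.
Proof.
case: i => // i /= Hi.
have Hi' : i < size s by rewrite size_s.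
set q := nth 0 s i.
have Hsplit : s = take i s ++ q :: drop i.+1 s.
  by rewrite -(drop_nth 0 Hi') cat_take_drop.
have Hq : q \notin take i s.
  move: uniq_s; rewrite {1}Hsplit cat_uniq /= => /and3P[_ ].
  by rewrite negb_or => /andP[].
apply/eqP; rewrite eqn_leq; apply/andP; split.
- apply/bigmax_leqP => m /andP[/eqP Hh Hso].
  have Hsub := mask_subseq m s.
  move: Hh Hso Hsub; case: (mask m s) => [|y u] /=.
    move=> Hq0; have : q \in s by rewrite /q mem_nth.
    by move/pos_s; rewrite -Hq0.
  move=> -> Hso Hsub; rewrite ltnS.
  apply: g_ub.
  + by move: Hsub; rewrite {1}Hsplit; apply: subseq_split.
  + by move: Hso; rewrite (path_sortedE ltn_trans) => /andP[].
  + by move: Hso; rewrite (path_sortedE ltn_trans) => /andP[].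
- have [u [Hs Hso Ha Hz]] := g_ex (drop i.+1 s) q.
  have Hsub : subseq (q :: u) s.
    rewrite {1}Hsplit -[q :: u]cat0s; apply: cat_subseq; first exact: sub0seq.
    by rewrite /= eqxx.
  case/subseqP: Hsub => m Hm Hmask.
  have Hm' : size m == n by rewrite Hm size_s.
  pose t := Tuple Hm'.
  have -> : (g (drop i.+1 s) q).+1 = size (mask t s) by rewrite /= -Hmask /= Hz.
  apply: (leq_bigmax_cond t).
  by rewrite /= -Hmask /= eqxx (path_sortedE ltn_trans) Ha Hso.
Qed.

End Perm.


Lemma count_split_q (t U : seq nat) v q : v <= q ->
  count (fun x => (v < x) && (x \notin U)) t =
  count (fun x => (q < x) && (x \notin U)) t +
  count (fun x => [&& v < x, x <= q & x \notin U]) t.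
Proof.
move=> Hvq; elim: t => //= x t ->.
case: (x \in U); rewrite /= ?andbF ?andbT ?addn0 //.
case: (ltnP q x) => Hqx; case: (ltnP v x) => Hvx /=; lia.
Qed.

Lemma count_rm (a : pred nat) t p : uniq t -> p \in t ->
  count (fun x => a x && (x != p)) t + a p = count a t.
Proof.
elim: t => //= x t IH /andP[Hx Hu]; rewrite inE.
case: (eqVneq p x) => [-> _ | Hpx /= Hp] /=.
- rewrite ?eqxx ?andbF add0n addnC; congr (_ + _).
  apply: eq_in_count => y Hy /=.
  case: eqP => [Hyx | _]; last by rewrite andbT.
  by rewrite -Hyx Hy in Hx.
- by rewrite andbT -addnA IH.
Qed.

Lemma key (t U Up : seq nat) q : uniq (q :: t) -> {subset U <= t} ->
 (forall v, count (fun x => (v < x) && (x \notin U)) t = g t v) ->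
 ((Up =i U) /\ (forall c, c \in t -> c < q -> c \in U)) \/
 (exists p, [/\ p \in t, p < q, p \notin U, Up =i (p :: U : seq nat) &
    forall c, c \in t -> c < q -> c \notin U -> c <= p]) ->
 forall v, count (fun x => (v < x) && (x \notin Up)) (q :: t) = g (q :: t) v.
Proof.
move=> /= /andP[Hqt Hut] HUt IH [[HUp Hall] | [p [Hpt Hpq HpU HUp Hmax]]] v.
- have HqU : q \notin U by apply: contra Hqt; apply: HUt.
  have -> : count (fun x => (v < x) && (x \notin Up)) t =
            count (fun x => (v < x) && (x \notin U)) t.
    by apply: eq_count => x; rewrite HUp.
  rewrite HUp HqU andbT IH.
  case: (ltnP v q) => Hvq /=; last by rewrite add0n.
  have Hgq : g t v = g t q.
    rewrite -!IH (count_split_q _ _ (ltnW Hvq)).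
    suff -> : count (fun x => [&& v < x, x <= q & x \notin U]) t = 0 by rewrite addn0.
    apply/eqP; rewrite -leqn0 leqNgt -has_count; apply/hasPn => x Hx.
    apply/negP => /and3P[_ Hxq HxU].
    have Hxq' : x < q by rewrite ltn_neqAle Hxq andbT; apply: contraNneq Hqt => <-.
    by rewrite (Hall x Hx Hxq') in HxU.
  by rewrite Hgq /maxn ltnSn add1n.
- have HqU : q \notin U by apply: contra Hqt; apply: HUt.
  have HqUp : q \notin Up.
    rewrite HUp inE negb_or HqU andbT; apply: contraNneq Hqt => ->; exact: Hpt.
  have Hc : count (fun x => (v < x) && (x \notin Up)) t + ((v < p) && (p \notin U)) =
            g t v.
    rewrite -IH -(count_rm (fun x => (v < x) && (x \notin U)) Hut Hpt) /=; congr (_ + _).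
    by apply: eq_count => x /=; rewrite HUp inE negb_or andbA andbAC.
  rewrite HqUp andbT HpU andbT in Hc *.
  case: (ltnP v q) => Hvq /=; last first.
    by rewrite add0n -Hc [v < p]ltnNge (leq_trans (ltnW Hpq) Hvq) addn0.
  have Hsplit := count_split_q t U (ltnW Hvq).
  rewrite !IH in Hsplit.
  case: (ltnP v p) => Hvp.
  + have : 0 < count (fun x => [&& v < x, x <= q & x \notin U]) t.
      by rewrite -has_count; apply/hasP; exists p => //; rewrite Hvp (ltnW Hpq).
    move: Hc Hsplit; rewrite Hvp /= /maxn; case: (ltnP (g t v) (g t q).+1); lia.
  + have H0 : count (fun x => [&& v < x, x <= q & x \notin U]) t = 0.
      apply/eqP; rewrite -leqn0 leqNgt -has_count; apply/hasPn => x Hx.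
      apply/negP => /and3P[Hvx Hxq HxU].
      have Hxq' : x < q by rewrite ltn_neqAle Hxq andbT; apply: contraNneq Hqt => <-.
      have := Hmax x Hx Hxq' HxU; lia.
    move: Hc Hsplit; rewrite H0 [v < p]ltnNge Hvp /= /maxn; case: (ltnP (g t v) (g t q).+1); lia.
Qed.

Local Open Scope fset_scope.

Section RDmem.
Variables (n : nat) (w : 'S_n).
Local Notation s := (oneline w).

Lemma mem_drop_nth r j : r <= j < n -> nth 0 s j \in drop r s.
Proof.
move=> /andP[Hrj Hj].
have -> : nth 0 s j = nth 0 (drop r s) (j - r) by rewrite nth_drop subnKC.
by apply: mem_nth; rewrite size_drop size_s; lia.
Qed.

Lemma RD_mem r c : ((r, c) \in RD w) =
  [&& 0 < r, r <= n, c \in drop r s & c < nth 0 s r.-1].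
Proof.
apply/idP/idP.
- case/imfsetP => [[a b]] /= Hab [-> ->].
  move: Hab; rewrite /Inv inE => /mapP[[a' b']] Hin [-> ->].
  move: Hin; rewrite /inv_pairs mem_filter /= => /andP[/andP[Hlt Hw] _].
  rewrite (@pval_nth n w b'.+1) /=; last by rewrite ltn_ord.
  rewrite (nth_s w b') (nth_s w a') ltnS Hw /= andbT.
  rewrite -(nth_s w b') ltn_ord /=.
  by apply: mem_drop_nth; rewrite Hlt ltn_ord.
- case/and4P => Hr Hrn Hc Hlt.
  case/(nthP 0): Hc => j Hj Hcj.
  rewrite size_drop size_s in Hj.
  rewrite nth_drop in Hcj.
  have Ha : r.-1 < n by lia.
  have Hb : r + j < n by lia.
  apply/imfsetP; exists (r, (r + j).+1) => /=.
  + rewrite /Inv inE; apply/mapP; exists (Ordinal Ha, Ordinal Hb) => /=.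
    * rewrite /inv_pairs mem_filter mem_enum in_setT andbT /=.
      have Hl : r.-1 < r + j by lia.
      rewrite Hl /=.
      move: Hlt; rewrite -Hcj (nth_s w (Ordinal Hb)) (nth_s w (Ordinal Ha)).
      by rewrite ltnS.
    * by congr (_, _); lia.
  + congr (_, _).
    by rewrite (pval_nth w) /= ?(nth_s w (Ordinal Hb)) -?Hcj ?(nth_s w (Ordinal Hb)) //; lia.
Qed.
End RDmem.


Definition step (D : diagram) (r : nat) (acc : seq (nat * nat)) :=
  let cands := [seq x.2 | x <- enum_fset D &
                          (x.1 == r) && (x.2 \notin [seq y.2 | y <- acc])] in
  if cands is [::] then acc else (r, \max_(c <- cands) c) :: acc.

Lemma clouds_step D r acc : clouds_from D r.+1 acc = clouds_from D r (step D r.+1 acc).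
Proof. by []. Qed.

Fixpoint accs (D : diagram) (N k : nat) : seq (nat * nat) :=
  match k with
  | 0 => [::]
  | k'.+1 => step D (N - k') (accs D N k')
  end.

Lemma max_mem (l : seq nat) : l != [::] -> \max_(c <- l) c \in l.
Proof.
elim: l => // x [|y l] IH _.
  by rewrite big_cons big_nil maxn0 mem_head.
rewrite big_cons inE; move: IH => /(_ isT).
set m := \max_(c <- _) c => Hm.
by rewrite /maxn; case: ltnP => _; rewrite ?Hm ?orbT ?eqxx.
Qed.

Lemma cands_mem (D : diagram) r (acc : seq (nat * nat)) c :
  (c \in [seq x.2 | x <- enum_fset D &
            (x.1 == r) && (x.2 \notin [seq y.2 | y <- acc])]) =
  ((r, c) \in D) && (c \notin [seq y.2 | y <- acc]).
Proof.
apply/mapP/andP.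
- case=> [[a b]]; rewrite mem_filter /= => /andP[/andP[/eqP -> HU] HD] ->.
  by split.
- case=> HD HU; exists (r, c) => //.
  by rewrite mem_filter /= eqxx HU.
Qed.

Lemma step_nil D r acc : (forall x, x \in D -> x.1 != r) -> step D r acc = acc.
Proof.
move=> H; rewrite /step.
have -> : [seq x <- enum_fset D | (x.1 == r) && (x.2 \notin [seq y.2 | y <- acc])] = [::].
  apply/eqP; rewrite -size_eq0 size_filter -leqn0 leqNgt -has_count.
  by apply/hasPn => x Hx; rewrite (negbTE (H x Hx)).
by [].
Qed.

Lemma step_mem D r acc y : y \in step D r acc -> (y \in acc) \/ y.1 = r.
Proof.
rewrite /step; case: [seq _ | _ <- _ & _] => [|a l]; first by left.
by rewrite inE => /orP[/eqP -> | ]; [right | left].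
Qed.

Lemma step_sub D r acc : {subset acc <= step D r acc}.
Proof.
rewrite /step; case: [seq _ | _ <- _ & _] => [|a l] //= y Hy.
by rewrite inE Hy orbT.
Qed.

Lemma cf_skip D m k acc : (forall x, x \in D -> x.1 <= m) ->
  clouds_from D (m + k) acc = clouds_from D m acc.
Proof.
move=> H; elim: k acc => [|k IH] acc; first by rewrite addn0.
rewrite addnS clouds_step step_nil ?IH // => x Hx.
by apply/eqP => E; have := H x Hx; rewrite E; lia.
Qed.

Lemma accs_rows D N k k' y : k <= k' -> y \in accs D N k' ->
  (y \in accs D N k) \/ y.1 <= N - k.
Proof.
elim: k' y => [|k' IH] y.
  by rewrite leqn0 => /eqP ->; left.
rewrite leq_eqVlt => /orP[/eqP -> | Hk]; first by left.
move=> /= /step_mem [Hy | ->]; first by apply: IH.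
by right; lia.
Qed.

Lemma accs_sub D N k k' : k <= k' -> {subset accs D N k <= accs D N k'}.
Proof.
elim: k' => [|k' IH]; first by rewrite leqn0 => /eqP ->.
rewrite leq_eqVlt => /orP[/eqP -> // | Hk] y Hy /=.
by apply: step_sub; apply: IH.
Qed.

Lemma cf_accs D N k : k <= N ->
  clouds_from D N [::] = clouds_from D (N - k) (accs D N k).
Proof.
elim: k => [|k IH] Hk; first by rewrite subn0.
rewrite IH; last by lia.
have -> : N - k = (N - k.+1).+1 by lia.
by rewrite clouds_step /= -[(N - k.+1).+1]/(N - k.+1).+1; congr (clouds_from _ _ (step _ _ _)); lia.
Qed.

Lemma snow_mem (D : diagram) i c : 0 < i ->
  ((i, c) \in snow D) =
  ((i, c) \in D) || has (fun y => (i < y.1) && (y.2 == c)) (dark_clouds D).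
Proof.
move=> Hi; rewrite /snow in_fsetU inE.
case HiD: ((i, c) \in D) => //=.
apply/flattenP/hasP.
- case=> l /mapP[y Hy ->] /mapP[r' Hr' [E1 E2]].
  move: Hr'; rewrite mem_filter mem_iota => /andP[_ /andP[H1 H2]].
  exists y => //; rewrite E1 E2 eqxx andbT.
  move: H1 H2; case: (y.1) => [|m] /=; rewrite ?add1n ?ltnS //.
  by move=> H1 H2; move: (leq_trans H1 H2).
- case=> y Hy /andP[Hiy /eqP Hc].
  exists [seq (r', y.2) | r' <- iota 1 y.1.-1 & (r', y.2) \notin D].
  + by apply/mapP; exists y.
  + apply/mapP; exists i; last by rewrite Hc.
    rewrite mem_filter mem_iota Hc HiD /=; lia.
Qed.


Section Inv.
Variables (s : seq nat) (D : diagram).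
Hypothesis Hu : uniq s.
Hypothesis HD : forall r c, ((r, c) \in D) =
  [&& 0 < r, r <= size s, c \in drop r s & c < nth 0 s r.-1].
Local Notation N := (size s).

Lemma inv_accs k : k <= N ->
  [/\ forall y, y \in accs D N k -> N - k < y.1 <= N,
      {subset [seq y.2 | y <- accs D N k] <= drop (N - k) s} &
      forall v, count (fun x => (v < x) && (x \notin [seq y.2 | y <- accs D N k]))
                  (drop (N - k) s) = g (drop (N - k) s) v].
Proof.
elim: k => [|k IH] Hk.
  by rewrite subn0 drop_oversize.
have [IHa IHb IHc] := IH (ltnW Hk).
set r := N - k.
have Hr : N - k.+1 = r.-1 by rewrite /r; lia.
have Hr0 : 0 < r by rewrite /r; lia.
set q := nth 0 s r.-1.
have Hdrop : drop r.-1 s = q :: drop r s.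
  rewrite (drop_nth 0); last by rewrite /r; lia.
  by rewrite prednK.
have Hu' : uniq (q :: drop r s) by rewrite -Hdrop drop_uniq.
set acc := accs D N k.
set U := [seq y.2 | y <- acc].
have -> : accs D N k.+1 = step D r acc by [].
rewrite Hr Hdrop.
rewrite /step.
have Hcm := @cands_mem D r acc.
case Hc: [seq _ | _ <- _ & _] => [|c0 l].
- split.
  + by move=> y /IHa; rewrite -/r; lia.
  + by move=> y /IHb Hy; rewrite inE Hy orbT.
  + apply: (key Hu' IHb IHc); left; split => // c Hc1 Hc2.
    apply/negPn/negP => HcU.
    have : c \in [seq x.2 | x <- enum_fset D &
            (x.1 == r) && (x.2 \notin [seq y.2 | y <- acc])].
      by rewrite Hcm HD Hr0 HcU Hc1 Hc2 /= andbT; rewrite /r; lia.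
    by rewrite Hc.
- set p := \max_(c <- c0 :: l) c.
  have Hp : p \in c0 :: l by apply: max_mem.
  rewrite -Hc Hcm HD in Hp.
  case/andP: Hp => /and4P[_ _ Hpd Hpq] HpU.
  split.
  + move=> y; rewrite inE => /orP[/eqP -> /= | /IHa]; rewrite -/r; lia.
  + move=> y; rewrite /= inE => /orP[/eqP -> | /IHb Hy]; rewrite inE ?Hpd ?Hy ?orbT //.
  + apply: (key Hu' IHb IHc); right; exists p; split => // c Hc1 Hc2 Hc3.
    rewrite /p; apply: (leq_bigmax_seq (F := id)) => //.
    by rewrite -Hc Hcm HD Hr0 Hc1 Hc2 Hc3 /= andbT; rewrite /r; lia.
Qed.

End Inv.


Section Main.
Variables (n : nat) (w : 'S_n).
Local Notation s := (oneline w).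
Local Notation D := (RD w).
Local Notation N := (size (oneline w)).

Lemma HD r c : ((r, c) \in D) =
  [&& 0 < r, r <= N, c \in drop r s & c < nth 0 s r.-1].
Proof. by rewrite RD_mem size_s. Qed.

Lemma dark_eq : dark_clouds D = accs D N N.
Proof.
have Hm : forall x, x \in D -> x.1 <= maxrow D.
  by move=> x Hx; apply: (leq_bigmax_seq (F := fun x => x.1)).
have Hmn : maxrow D <= N.
  apply/bigmax_leqP_seq => [[r c]] Hx _ /=.
  by move: Hx; rewrite HD => /and4P[].
rewrite /dark_clouds -(@cf_skip D (maxrow D) (N - maxrow D) [::] Hm) subnKC //.
by rewrite (cf_accs D (leqnn N)) subnn.
Qed.

Lemma row_card i : 0 < i <= n ->
  #|` [fset x in snow D | x.1 == i]| = n - i - g (drop i s) (nth 0 s i.-1).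
Proof.
move=> /andP[Hi0 Hin].
have HiN : i <= N by rewrite size_s.
have Hk : N - i <= N by apply: leq_subr.
have [Ia Ib Ic] := inv_accs (uniq_s w) HD Hk.
rewrite subKn // in Ia Ib Ic.
set q := nth 0 s i.-1.
set U := [seq y.2 | y <- accs D N (N - i)] in Ib Ic.
have Hdrop : drop i.-1 s = q :: drop i s.
  rewrite (drop_nth 0); last by lia.
  by rewrite prednK.
have Hu' : uniq (q :: drop i s) by rewrite -Hdrop drop_uniq ?uniq_s.
have snowE : forall c, ((i, c) \in snow D) =
    (c \in drop i s) && ((c < q) || (c \in U)).
  move=> c; rewrite snow_mem // dark_eq HD Hi0 HiN /=.
  have -> : has (fun y => (i < y.1) && (y.2 == c)) (accs D N N) = (c \in U).
    apply/hasP/mapP.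
    - case=> y Hy /andP[Hiy /eqP <-]; exists y => //.
      case: (accs_rows Hk Hy) => // H; rewrite subKn // in H; by rewrite ltnNge H in Hiy.
    - case=> y Hy ->; exists y; last by rewrite eqxx andbT; by case/andP: (Ia y Hy).
      exact: (accs_sub Hk).
  case: (boolP (c \in U)) => HcU; first by rewrite (Ib c HcU) !orbT.
  by rewrite !orbF.
have -> : [fset x in snow D | x.1 == i] =
    [fset x in [seq (i, c) | c <- [seq c <- drop i s | (c < q) || (c \in U)]]].
  apply/fsetP => [[r c]]; rewrite !inE /=.
  case: (eqVneq r i) => [-> | Hri] /=.
  - have := snowE c; rewrite /snow in_fsetU inE => ->.
    rewrite andbT mem_map; last by move=> a b [].
    by rewrite mem_filter andbC.
  - rewrite andbF; apply/esym/negbTE/mapP => [[c' _ [E _]]].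
    by rewrite E eqxx in Hri.
rewrite card_fseq undup_id; last first.
  rewrite map_inj_uniq; last by move=> a b [].
  by apply: filter_uniq; rewrite drop_uniq ?uniq_s.
rewrite size_map size_filter.
have Hsz : size (drop i s) = n - i by rewrite size_drop size_s.
have := count_predC (fun c => (c < q) || (c \in U)) (drop i s).
have -> : count (predC (fun c => (c < q) || (c \in U))) (drop i s) =
          count (fun x => (q < x) && (x \notin U)) (drop i s).
  apply: eq_in_count => x Hx /=.
  rewrite negb_or -leqNgt ltn_neqAle.
  have -> : (q != x) by apply/eqP => E; move: Hu'; rewrite /= E Hx.
  by [].
rewrite Ic Hsz; lia.
Qed.

End Main.

Theorem theorem5p5 (n : nat) (w : 'S_n) :
  forall i : nat, 0 < i -> rajcode_perm w i = rajcode_diag (RD w) i.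
Proof.
move=> i Hi; rewrite /rajcode_perm /rajcode_diag.
case: (leqP i n) => Hin.
- rewrite Hi /= (@pval_nth n w i) ?Hi ?Hin // LIS_g ?Hi ?Hin //.
  rewrite row_card ?Hi ?Hin //; lia.
- rewrite andbF.
  apply/esym/eqP; rewrite cardfs_eq0; apply/eqP/fsetP => [[r c]].
  rewrite !inE /=; apply/negbTE/andP => [[Hs /eqP Er]].
  rewrite Er in Hs.
  have := snow_mem (RD w) c Hi; rewrite /snow in_fsetU inE => E.
  move: Hs; rewrite E HD => /orP[/and4P[_ H _ _] | /hasP[y Hy /andP[Hiy _]]].
    by rewrite size_s in H; lia.
  move: Hy; rewrite dark_eq => Hy.
  have [Ia _ _] := inv_accs (uniq_s w) (@HD n w) (leqnn _).
  case/andP: (Ia y Hy) => _; rewrite size_s => H.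
  by have := leq_trans Hiy H; rewrite ltnNge (ltnW Hin).
Qed.
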